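(* Let $E=(C,V)$ be an approval election such that $0<|A(u)|=|A(v)|<|C|$ for all $u,v\in V$. Then $\mathrm{pair\text{-}agr}(E)=\mathrm{pcc\text{-}agr}(E)$.
   Context: An (approval) election is a pair $E=(C,V)$ with candidate set $C=\{c_1,\dots,c_m\}$ and a collection of voters $V$; each vote is a binary vector in $\{0,1\}^m$, and $A(v)$ is the set of candidates approved by $v$. $\mathrm{ham}(u,v)=\sum_j|u[j]-v[j]|$. $\mathrm{satr}(E)=\frac{1}{|V||C|}\sum_{v\in V}|A(v)|$. $\mathrm{pair\text{-}agr}(E)=1-\frac{\sum_{u\in V}\sum_{v\in V}\mathrm{ham}(u,v)}{2|V|^2|C|\,\mathrm{satr}(E)(1-\mathrm{satr}(E))}$. Pearson correlation $\mathrm{pcc}(x,y)=\frac{\sum_i(x[i]-\overline{x})(y[i]-\overline{y})}{\sqrt{\sum_i(x[i]-\overline{x})^2}\sqrt{\sum_i(y[i]-\overline{y})^2}}$ (set to $1$ if $x$ or $y$ is constant), and $\mathrm{pcc\text{-}agr}(E)=\frac{1}{|V|^2}\sum_{u\in V}\sum_{v\in V}\mathrm{pcc}(u,v)$; sums are over all ordered pairs including $u=v$. *)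

(* Defs.v *)
From mathcomp Require Import all_boot all_order all_algebra.
Set Implicit Arguments. Unset Strict Implicit. Unset Printing Implicit Defensive.
Import Order.TTheory GRing.Theory Num.Theory.
Local Open Scope ring_scope.

(* An approval election with m candidates c_0..c_{m-1} and n voters (a
   collection, so repeated votes are allowed): vote i is a binary vector
   V i : {ffun 'I_m -> bool};  A(v) = set of j with v j = true. *)
Section Election.
Variable R : rcfType.
Variables m n : nat.

Definition vote := {ffun 'I_m -> bool}.

Definition bv (v : vote) (j : 'I_m) : R := (v j)%:R.

Definition napp (v : vote) : nat := #|[set j | v j]|.

Definition ham (u v : vote) : R := \sum_(j < m) `|bv u j - bv v j|.

Definition satr (V : 'I_n -> vote) : R :=
  (\sum_(i < n) (napp (V i))%:R) / (n%:R * m%:R).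

Definition pair_agr (V : 'I_n -> vote) : R :=
  1 - (\sum_(i < n) \sum_(k < n) ham (V i) (V k)) /
      (2 * n%:R ^+ 2 * m%:R * satr V * (1 - satr V)).

Definition mean (x : 'I_m -> R) : R := (\sum_(j < m) x j) / m%:R.

Definition is_const (x : 'I_m -> R) : bool := [forall j, forall k, x j == x k].

Definition pcc (x y : 'I_m -> R) : R :=
  if is_const x || is_const y then 1 else
  (\sum_(j < m) (x j - mean x) * (y j - mean y)) /
  (Num.sqrt (\sum_(j < m) (x j - mean x) ^+ 2) *
   Num.sqrt (\sum_(j < m) (y j - mean y) ^+ 2)).

Definition pcc_agr (V : 'I_n -> vote) : R :=
  (\sum_(i < n) \sum_(k < n) pcc (bv (V i)) (bv (V k))) / n%:R ^+ 2.

End Election.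

(* Main.v *)
Require Import Defs.
From mathcomp Require Import all_boot all_order all_algebra.
From mathcomp Require Import ring lra.
Import Order.TTheory GRing.Theory Num.Theory.
Local Open Scope ring_scope.

Section Aux.
Variable R : rcfType.
Variable m : nat.

Lemma bv_sq (v : vote m) j : bv R v j * bv R v j = bv R v j.
Proof. by rewrite /bv; case: (v j); rewrite /= ?mulr1 ?mulr0. Qed.

Lemma sum_bv (v : vote m) : \sum_j bv R v j = (napp v)%:R.
Proof.
rewrite /napp -sum1_card natr_sum [RHS]big_mkcond /=.
by apply: eq_bigr => j _; rewrite inE /bv; case: (v j).
Qed.

Lemma ham_eq (u v : vote m) :
  ham R u v = (napp u)%:R + (napp v)%:R - 2 * \sum_j bv R u j * bv R v j.
Proof.
rewrite -!sum_bv mulr_sumr -big_split -sumrB /ham; apply: eq_bigr => j _.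
rewrite /bv; case: (u j); case: (v j) => /=.
- by rewrite subrr normr0; ring.
- by rewrite subr0 normr1; ring.
- by rewrite sub0r normrN normr1; ring.
- by rewrite subrr normr0; ring.
Qed.

Lemma sum_centered (x y : 'I_m -> R) a b :
  \sum_j (x j - a) * (y j - b) =
  \sum_j x j * y j - a * \sum_j y j - b * \sum_j x j + a * b * m%:R.
Proof.
rewrite (eq_bigr (fun j => (x j * y j - a * y j) - b * x j + a * b)); last first.
  by move=> j _; ring.
rewrite !big_split /= !sumrN -!mulr_sumr sumr_const card_ord mulr_natr.
by rewrite mulrnAr.
Qed.

Lemma not_const (v : vote m) : (0 < napp v)%N -> (napp v < m)%N ->
  is_const (bv R v) = false.
Proof.
move=> H0 Hm; apply/negP => /forallP Hc.
move: H0; rewrite /napp card_gt0 => /set0Pn [j]; rewrite inE => Hj.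
have Hall : [set j | v j] = setT.
  apply/setP => k; rewrite !inE.
  move: (Hc j) => /forallP /(_ k) /eqP.
  rewrite /bv Hj; case: (v k) => //= /eqP.
  by rewrite pnatr_eq0.
by move: Hm; rewrite /napp Hall cardsT card_ord ltnn.
Qed.

Lemma pcc_eq (u v : vote m) (K : nat) :
  (0 < K)%N -> (K < m)%N -> napp u = K -> napp v = K ->
  pcc (bv R u) (bv R v) =
  (\sum_j bv R u j * bv R v j - K%:R * K%:R / m%:R) / (K%:R - K%:R * K%:R / m%:R).
Proof.
move=> K0 Km Hu Hv.
rewrite /pcc !not_const ?Hu ?Hv //=.
have Hsq (w : vote m) : napp w = K -> Num.sqrt (\sum_j (bv R w j - mean (bv R w)) ^+ 2)
   = Num.sqrt (K%:R - K%:R * K%:R / m%:R).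
  move=> Hw; congr Num.sqrt.
  rewrite (eq_bigr (fun j => (bv R w j - mean (bv R w)) * (bv R w j - mean (bv R w))));
    last by move=> j _; rewrite expr2.
  rewrite (sum_centered (bv R w) (bv R w)) (eq_bigr (bv R w)); last by move=> j _; rewrite bv_sq.
  rewrite /mean sum_bv Hw.
  have : m%:R != 0 :> R by rewrite pnatr_eq0 -lt0n; apply: leq_trans Km.
  move=> mn0; field; done.
have Hpos : 0 <= K%:R - K%:R * K%:R / m%:R :> R.
  have mp : 0 < m%:R :> R by rewrite ltr0n; apply: leq_trans Km.
  rewrite subr_ge0 -mulrA ler_piMr ?ler0n // ler_pdivrMr // mul1r ler_nat ltnW //.
rewrite (Hsq u Hu) (Hsq v Hv) -expr2 sqr_sqrtr //.
rewrite sum_centered /mean !sum_bv Hu Hv.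
have : m%:R != 0 :> R by rewrite pnatr_eq0 -lt0n; apply: leq_trans Km.
move=> mn0; congr (_ / _); field; done.
Qed.

End Aux.

Lemma dsum_affine (R : rcfType) (n : nat) (f : 'I_n -> 'I_n -> R) a b :
  \sum_(i < n) \sum_(k < n) (a + b * f i k) =
  a * (n%:R * n%:R) + b * \sum_(i < n) \sum_(k < n) f i k.
Proof.
under eq_bigr => i _ do rewrite big_split /= sumr_const card_ord -mulr_sumr.
rewrite big_split /= sumr_const card_ord -mulr_sumr !mulr_natr.
by rewrite mulrnAr mulr_natr.
Qed.

Theorem proposition6 (R : rcfType) (m n : nat) (V : 'I_n -> vote m) :
  (0 < n)%N ->
  (forall u v : 'I_n, (0 < napp (V u))%N /\ napp (V u) = napp (V v) /\ (napp (V v) < m)%N) ->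
  pair_agr R V = pcc_agr R V.
Proof.
move=> n0 H.
pose i0 : 'I_n := Ordinal n0.
pose K := napp (V i0).
have HK i : napp (V i) = K by case: (H i i0) => _ [].
have K0 : (0 < K)%N by case: (H i0 i0).
have Km : (K < m)%N by case: (H i0 i0) => _ [].
have mn0 : m%:R != 0 :> R by rewrite pnatr_eq0 -lt0n; apply: leq_trans Km.
have nn0 : n%:R != 0 :> R by rewrite pnatr_eq0 -lt0n.
have Kn0 : K%:R != 0 :> R by rewrite pnatr_eq0 -lt0n.
have mK0 : m%:R - K%:R != 0 :> R.
  by rewrite subr_eq0 eqr_nat gtn_eqF.
have D0 : K%:R - K%:R * K%:R / m%:R != 0 :> R.
  have -> : K%:R - K%:R * K%:R / m%:R = K%:R * (m%:R - K%:R) / m%:R :> R.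
    by field.
  by rewrite !mulf_neq0 // invr_eq0.
pose c i k := \sum_j bv R (V i) j * bv R (V k) j.
have Hham i k : ham R (V i) (V k) = (K%:R + K%:R) + (-2) * c i k.
  by rewrite ham_eq !HK /c; ring.
have Hpcc i k : pcc (bv R (V i)) (bv R (V k)) =
     (- (K%:R * K%:R / m%:R) / (K%:R - K%:R * K%:R / m%:R))
     + (K%:R - K%:R * K%:R / m%:R)^-1 * c i k.
  rewrite (@pcc_eq _ _ _ _ K) // /c. by rewrite mulrBl addrC mulNr [_^-1 * _]mulrC.
rewrite /pair_agr /pcc_agr /satr.
under eq_bigr => i _ do under eq_bigr => k _ do rewrite Hham.
under [in RHS]eq_bigr => i _ do under eq_bigr => k _ do rewrite Hpcc.
rewrite !dsum_affine.
have Hs : \sum_(i < n) (napp (V i))%:R = K%:R * n%:R :> R.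
  rewrite (eq_bigr (fun _ => K%:R)); last by move=> i _; rewrite HK.
  by rewrite sumr_const card_ord mulr_natr.
rewrite Hs.
set S := \sum_(i < n) \sum_(k < n) c i k.
field; by rewrite nn0 mn0 mK0 Kn0 -mulrBr mulf_neq0.
Qed.
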